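(* For any finite simple graph $X$ and any update sequence $\pi\in S_X$, the mixed extended threshold SDS map $\mathbf{F}^\updownarrow_\pi$ has no periodic orbits of length $\ge 2$.
   Context: Let $X$ be a finite simple graph with vertices $1,\dots,n$; $d(v)$ is the degree of $v$ and $n[v]$ the closed neighborhood of $v$. An extended vertex state is $s_v=(x_v,k_v)\in\{0,1\}\times\{1,\dots,d(v)+1\}$; $\mathcal{S}$ is the product of these sets. Let $\sigma(x[v])=|\{u\in n[v]:x_u=1\}|$. The mixed vertex function maps $(x_v,k_v)$ to $(x_v',k_v')$ with $x_v'=1$ iff $\sigma(x[v])\ge k_v$ (else $0$), and $k_v'=k_v+1$ if $x_v=0$ and $\sigma(x[v])\ge k_v$; $k_v'=k_v-1$ if $x_v=1$ and $\sigma(x[v])<k_v$; $k_v'=k_v$ otherwise. The local map $F^\updownarrow_v$ updates only coordinate $v$ by this rule, and for a permutation $\pi=(\pi_1,\dots,\pi_n)$ of the vertices, $\mathbf{F}^\updownarrow_\pi=F^\updownarrow_{\pi_n}\circ\cdots\circ F^\updownarrow_{\pi_1}$. A periodic orbit of length $m$ is a cycle of $m$ distinct states under iteration. *)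

(* Defs.v *)
From mathcomp Require Import all_boot all_order all_fingroup.
Set Implicit Arguments. Unset Strict Implicit. Unset Printing Implicit Defensive.

Definition simple_graph (n : nat) (adj : rel 'I_n) : Prop :=
  (forall u v, adj u v = adj v u) /\ (forall v, adj v v = false).

Definition cnbhd n (adj : rel 'I_n) (v : 'I_n) : {set 'I_n} :=
  [set u | (u == v) || adj v u].
Definition deg n (adj : rel 'I_n) (v : 'I_n) : nat := #|[set u | adj v u]|.

(* extended states: s v = (x_v, k_v) *)
Definition estate (n : nat) := {ffun 'I_n -> bool * nat}.

Definition in_S n (adj : rel 'I_n) (s : estate n) : Prop :=
  forall v, 1 <= (s v).2 <= (deg adj v).+1.

Definition sigma n (adj : rel 'I_n) (s : estate n) (v : 'I_n) : nat :=
  #|[set u in cnbhd adj v | (s u).1]|.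

Definition mixed_vf (xv : bool) (kv sig : nat) : bool * nat :=
  let x' := kv <= sig in
  let k' := if ~~ xv && (kv <= sig) then kv.+1
            else if xv && (sig < kv) then kv.-1 else kv in
  (x', k').

Definition Floc n (adj : rel 'I_n) (v : 'I_n) (s : estate n) : estate n :=
  [ffun u => if u == v then mixed_vf (s v).1 (s v).2 (sigma adj s v) else s u].

(* SDS map F_pi = F_{pi_n} o ... o F_{pi_1} (pi_1 applied first) *)
Definition SDS n (adj : rel 'I_n) (pi : 'S_n) (s : estate n) : estate n :=
  foldl (fun t i => Floc adj (pi i) t) s (enum 'I_n).

Definition periodic_orbit n (F : estate n -> estate n) (S : estate n -> Prop)
  (s : estate n) (m : nat) : Prop :=
  [/\ 0 < m, S s, iter m F s = s & uniq [seq iter i F s | i <- iota 0 m]].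

(* Main.v *)
Require Import Defs.
From mathcomp Require Import all_boot all_order all_fingroup.
From mathcomp Require Import all_algebra zify ring.
Import GRing.Theory Num.Theory Order.TTheory.
Set Implicit Arguments. Unset Strict Implicit. Unset Printing Implicit Defensive.
Local Open Scope ring_scope.

Definition xz n (s : estate n) (u : 'I_n) : int := Posz (nat_of_bool (s u).1).
Definition az n (adj : rel 'I_n) (u w : 'I_n) : int :=
  Posz (nat_of_bool ((u != w) && adj u w)).
Definition Pq n (adj : rel 'I_n) (s : estate n) : int :=
  \sum_u \sum_w xz s u * xz s w * az adj u w.
Definition Ql n (s : estate n) : int :=
  \sum_u xz s u * (2 * Posz (s u).2 - 3).
Definition En n adj (s : estate n) : int := Ql s - Pq adj s.

Lemma Pq_split n (adj : rel 'I_n) (v : 'I_n) (s t : estate n) :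
  (forall u w, adj u w = adj w u) ->
  (forall u, u != v -> t u = s u) ->
  Pq adj t = 2 * xz t v * (\sum_(w | w != v) xz s w * az adj v w)
    + \sum_(u | u != v) \sum_(w | w != v) xz s u * xz s w * az adj u w.
Proof.
move=> sym eqts.
have ex u : u != v -> xz t u = xz s u by move=> uv; rewrite /xz eqts.
have avv : az adj v v = 0 by rewrite /az eqxx.
rewrite /Pq (bigD1 v) //= (bigD1 v) //= avv mulr0 add0r.
have -> : \sum_(i | i != v) \sum_w xz t i * xz t w * az adj i w =
   \sum_(i | i != v) (xz s i * xz t v * az adj i v +
     \sum_(j | j != v) xz s i * xz t j * az adj i j).
  apply: eq_bigr => u uv; rewrite (bigD1 v) //= (ex u uv) //.
rewrite big_split /=.
have -> : \sum_(i | i != v) xz s i * xz t v * az adj i v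
   = xz t v * \sum_(w | w != v) xz s w * az adj v w.
  rewrite mulr_sumr; apply: eq_bigr => i iv.
  by rewrite /az sym eq_sym mulrA [xz t v * _]mulrC.
have -> : \sum_(i | i != v) xz t v * xz t i * az adj v i
   = xz t v * \sum_(w | w != v) xz s w * az adj v w.
  rewrite mulr_sumr; apply: eq_bigr => i iv.
  by rewrite (ex i iv) mulrA.
have -> : \sum_(i | i != v) \sum_(j | j != v) xz s i * xz t j * az adj i j
   = \sum_(u | u != v) \sum_(w | w != v) xz s u * xz s w * az adj u w.
  apply: eq_bigr => i iv; apply: eq_bigr => j jv; by rewrite (ex j jv).
by ring.
Qed.

Lemma Ql_split n (v : 'I_n) (s t : estate n) :
  (forall u, u != v -> t u = s u) ->
  Ql t = xz t v * (2 * Posz (t v).2 - 3) +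
         \sum_(u | u != v) xz s u * (2 * Posz (s u).2 - 3).
Proof.
move=> eqts; rewrite /Ql (bigD1 v) //=; congr (_ + _).
by apply: eq_bigr => u uv; rewrite /xz eqts.
Qed.

Lemma sigma_split n (adj : rel 'I_n) (s : estate n) (v : 'I_n) :
  sigma adj s v = ((s v).1 + #|[set w | (w != v) && adj v w && (s w).1]|)%N.
Proof.
rewrite /sigma [LHS](cardsD1 v) !inE eqxx /=.
have -> : [set u in cnbhd adj v | (s u).1] :\ v = [set w | (w != v) && adj v w & (s w).1] by
  apply/setP => w; rewrite !inE /cnbhd ?inE; by case: (w =P v).
by [].
Qed.

Lemma N_sum n (adj : rel 'I_n) (s : estate n) (v : 'I_n) :
  \sum_(w | w != v) xz s w * az adj v w =
  Posz #|[set w | (w != v) && adj v w && (s w).1]|.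
Proof.
rewrite -sum1_card (big_morph Posz PoszD (erefl _)) [RHS]big_mkcond [LHS]big_mkcond /=.
apply: eq_bigr => w _; rewrite inE /xz /az eq_sym.
by case: (v != w); case: (s w).1; case: (adj v w).
Qed.

Lemma Floc_dec n (adj : rel 'I_n) (v : 'I_n) (s : estate n) :
  (forall u w, adj u w = adj w u) ->
  Floc adj v s = s \/ En adj (Floc adj v s) < En adj s.
Proof.
move=> sym.
set t := Floc adj v s.
have tu : forall u, u != v -> t u = s u.
  by move=> u uv; rewrite /t /Floc ffunE (negbTE uv).
have tv : t v = mixed_vf (s v).1 (s v).2 (sigma adj s v).
  by rewrite /t /Floc ffunE eqxx.
have same : t v = s v -> t = s.
  move=> e; apply/ffunP => u; case: (eqVneq u v) => [->|uv]; first exact: e.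
  exact: tu.
have hs := sigma_split adj s v.
have hN := N_sum adj s v.
rewrite /En (Ql_split tu) (Ql_split (s:=s) (t:=s) (v:=v)) //.
rewrite (Pq_split sym tu) (Pq_split (v:=v) (s:=s) (t:=s) sym) // hN.
move: hs tv same; set N := #|_|.
set A := \sum_(u | u != v) xz s u * (2 * Posz (s u).2 - 3).
set B := \sum_(u | u != v) \sum_(w | w != v) xz s u * xz s w * az adj u w.
clearbody N A B.
rewrite /mixed_vf.
set sg := sigma adj s v.
rewrite /xz; case E: (s v) => [b k] /=.
clear E; case: b => hs tv same; case: (leqP k sg) => hk.
- left; apply: same; rewrite tv hk /= ltnNge hk //.
- right; rewrite tv leqNgt hk /=. lia.
- right; rewrite tv /= hk /=. lia.
- left; apply: same; rewrite tv leqNgt hk. by [].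
Qed.

Lemma foldl_dec n (adj : rel 'I_n) (pi : 'S_n) :
  (forall u w, adj u w = adj w u) ->
  forall (l : seq 'I_n) (s : estate n),
  let t := foldl (fun t i => Floc adj (pi i) t) s l in
  t = s \/ En adj t < En adj s.
Proof.
move=> sym; elim=> [|a l IH] s //=; first by left.
have [e|lt1] := Floc_dec (pi a) s sym.
  by rewrite e; exact: IH.
have [e2|lt2] := IH (Floc adj (pi a) s).
  by right; rewrite e2.
by right; exact: lt_trans lt2 lt1.
Qed.

Lemma SDS_dec n (adj : rel 'I_n) (pi : 'S_n) (s : estate n) :
  (forall u w, adj u w = adj w u) ->
  SDS adj pi s = s \/ En adj (SDS adj pi s) < En adj s.
Proof. move=> sym; exact: (foldl_dec pi sym). Qed.

Lemma SDS_iter_le n (adj : rel 'I_n) (pi : 'S_n) (s : estate n) k :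
  (forall u w, adj u w = adj w u) ->
  En adj (iter k (SDS adj pi) s) <= En adj s.
Proof.
move=> sym; elim: k => [|k IH] //=.
have [->|lt] := SDS_dec pi (iter k (SDS adj pi) s) sym; first exact: IH.
exact: le_trans (ltW lt) IH.
Qed.

Local Close Scope ring_scope.

Theorem proposition3p6 (n : nat) (adj : rel 'I_n) (pi : 'S_n) :
  simple_graph adj ->
  forall (s : estate n) (m : nat),
    periodic_orbit (SDS adj pi) (in_S adj) s m -> m < 2.
Proof.
move=> [sym _] s m [m0 _ Hit Hu].
rewrite ltnNge; apply/negP => m2.
case: m m0 m2 Hit Hu => [|[|m']] // _ _ Hit Hu.
have Fs : SDS adj pi s = s.
  have [//|lt] := SDS_dec pi s sym.
  have := SDS_iter_le pi (SDS adj pi s) m'.+1 sym.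
  rewrite -iterSr Hit => le1.
  by have := lt_le_trans lt le1; rewrite ltxx.
move: Hu; rewrite /= inE Fs eqxx.
by [].
Qed.
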